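(* Let $P_1,Q_1\in\mathcal{PP}(k)$ and $P_2,Q_2\in\mathcal{PP}(l)$. The following conditions are equivalent: (1) $P_1P_2\leq Q_1Q_2$; (2) $P_1\triangleleft P_2\leq Q_1\triangleleft Q_2$; (3) $P_1\leq Q_1$ and $P_2\leq Q_2$.
   Context: A plane poset is a finite set with two partial orders $\leq_h,\leq_r$ such that two distinct elements are $\leq_h$-comparable iff they are not $\leq_r$-comparable; $\mathcal{PP}(n)$ is the set of isomorphism classes of plane posets with $n$ elements. On a plane poset, $x\leq y$ iff ($x\leq_h y$ or $x\leq_r y$) is a total order (known fact). For $P,Q\in\mathcal{PP}(n)$, $\theta_{P,Q}$ is the increasing bijection $P\to Q$, and $P\leq Q$ means: for all $x,y\in P$, $\theta_{P,Q}(x)\leq_h\theta_{P,Q}(y)$ in $Q$ implies $x\leq_h y$ in $P$. For plane posets $P,Q$: $PQ$ is the plane poset on $P\sqcup Q$ in which $P,Q$ are plane subposets, no element of $P$ is $\leq_h$-comparable with an element of $Q$, and $x<_r y$ for all $x\in P,y\in Q$; $P\triangleleft Q$ is the plane poset on $P\sqcup Q$ in which $P,Q$ are plane subposets, no element of $P$ is $\leq_r$-comparable with an element of $Q$, and $x<_h y$ for all $x\in P,y\in Q$. *)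

(* Defs.v *)
From mathcomp Require Import all_boot.
Set Implicit Arguments. Unset Strict Implicit. Unset Printing Implicit Defensive.

Definition partial_order (T : finType) (R : rel T) : Prop :=
  reflexive R /\ antisymmetric R /\ transitive R.

Definition plane_poset (T : finType) (h r : rel T) : Prop :=
  [/\ partial_order h, partial_order r &
      forall x y : T, x != y -> (h x y || h y x) = ~~ (r x y || r y x)].

Definition pp_tot (T : finType) (h r : rel T) : rel T :=
  fun x y => h x y || r x y.

Definition pp_le (T U : finType) (hP rP : rel T) (hQ rQ : rel U) : Prop :=
  exists theta : T -> U,
    [/\ bijective theta,
        (forall x y, pp_tot hP rP x y -> pp_tot hQ rQ (theta x) (theta y)) &
        (forall x y, hQ (theta x) (theta y) -> hP x y)].

(* Product PQ on P ⊔ Q (elements of P are inl, of Q are inr). *)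
Definition prod_h (T U : finType) (h1 : rel T) (h2 : rel U) : rel (T + U) :=
  fun a b => match a, b with
  | inl x, inl y => h1 x y
  | inr x, inr y => h2 x y
  | _, _ => false end.
Definition prod_r (T U : finType) (r1 : rel T) (r2 : rel U) : rel (T + U) :=
  fun a b => match a, b with
  | inl x, inl y => r1 x y
  | inr x, inr y => r2 x y
  | inl _, inr _ => true
  | inr _, inl _ => false end.

Definition tri_h (T U : finType) (h1 : rel T) (h2 : rel U) : rel (T + U) :=
  fun a b => match a, b with
  | inl x, inl y => h1 x y
  | inr x, inr y => h2 x y
  | inl _, inr _ => true
  | inr _, inl _ => false end.
Definition tri_r (T U : finType) (r1 : rel T) (r2 : rel U) : rel (T + U) :=
  fun a b => match a, b with
  | inl x, inl y => r1 x y
  | inr x, inr y => r2 x y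
  | _, _ => false end.

(* Main.v *)
Require Import Defs.
From mathcomp Require Import all_boot.
Set Implicit Arguments. Unset Strict Implicit. Unset Printing Implicit Defensive.

Definition isr (A B : Type) (a : A + B) : bool := if a is inr _ then true else false.

Lemma side_l (T1 T2 U1 U2 : finType) (theta : T1 + T2 -> U1 + U2) :
  injective theta -> #|T2| = #|U2| ->
  (forall x z, ~~ (isr (theta (inl x)) && ~~ isr (theta (inr z)))) ->
  forall x, ~~ isr (theta (inl x)).
Proof.
move=> inj c2 C x0; apply/negP => Hx.
case E: (theta (inl x0)) Hx => [//|y0] _.
have Hz : forall z, isr (theta (inr z)).
  by move=> z; have := C x0 z; rewrite E /=; case: (isr _).
pose ext (a : U1 + U2) := match a with inr u => u | inl _ => y0 end.
pose g (o : option T2) := if o is Some z then ext (theta (inr z)) else y0.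
have ginj : injective g.
  have eext : forall z, theta (inr z) = inr (ext (theta (inr z))).
    by move=> z; have := Hz z; case: (theta (inr z)).
  case=> [a|] [b|] //= e.
  - have : theta (inr a) = theta (inr b) by rewrite (eext a) (eext b) e.
    by move/inj; case=> ->.
  - have : theta (inr a) = theta (inl x0) by rewrite (eext a) E e.
    by move/inj.
  - have : theta (inr b) = theta (inl x0) by rewrite (eext b) E e.
    by move/inj.
have := @leq_card _ _ g ginj; rewrite card_option c2 ltnn //.
Qed.

Definition swp (A B : Type) (a : A + B) : B + A :=
  match a with inl x => inr x | inr y => inl y end.

Lemma side_r (T1 T2 U1 U2 : finType) (theta : T1 + T2 -> U1 + U2) :
  injective theta -> #|T1| = #|U1| ->
  (forall x z, ~~ (isr (theta (inl x)) && ~~ isr (theta (inr z)))) ->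
  forall z, isr (theta (inr z)).
Proof.
move=> inj c1 C z.
pose th' (a : T2 + T1) := swp (theta (swp a)).
have inj' : injective th'.
  move=> a b /= e; have : swp (swp (theta (swp a))) = swp (swp (theta (swp b))).
    by rewrite /th' in e; rewrite e.
  have swK : forall (A B : Type) (c : A + B), swp (swp c) = c by move=> ? ? [].
  by rewrite !swK => /inj e2; rewrite -(swK _ _ a) e2 swK.
have := @side_l _ _ _ _ th' inj' c1.
have isw : forall (A B : Type) (c : A + B), isr (swp c) = ~~ isr c by move=> ? ? [].
move=> H.
have H' : forall (x : T2) (w : T1), ~~ (isr (th' (inl x)) && ~~ isr (th' (inr w))).
  move=> x w; have := C w x; rewrite /th' /= !isw negbK andbC //.
by have := H H' z; rewrite /th' /= isw negbK.
Qed.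

Section Split.
Variables (TP1 TQ1 TP2 TQ2 : finType)
  (hP1 rP1 : rel TP1) (hQ1 rQ1 : rel TQ1)
  (hP2 rP2 : rel TP2) (hQ2 rQ2 : rel TQ2)
  (hS rS : rel (TP1 + TP2)) (hT rT : rel (TQ1 + TQ2)).
Hypotheses
  (hS1 : forall x y, hS (inl x) (inl y) = hP1 x y)
  (rS1 : forall x y, rS (inl x) (inl y) = rP1 x y)
  (hS2 : forall x y, hS (inr x) (inr y) = hP2 x y)
  (rS2 : forall x y, rS (inr x) (inr y) = rP2 x y)
  (hT1 : forall x y, hT (inl x) (inl y) = hQ1 x y)
  (rT1 : forall x y, rT (inl x) (inl y) = rQ1 x y)
  (hT2 : forall x y, hT (inr x) (inr y) = hQ2 x y)
  (rT2 : forall x y, rT (inr x) (inr y) = rQ2 x y)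
  (Scross : forall x z, pp_tot hS rS (inl x) (inr z))
  (Tcross : forall x z, ~~ pp_tot hT rT (inr z) (inl x))
  (c1 : #|TP1| = #|TQ1|) (c2 : #|TP2| = #|TQ2|).

Lemma split_le : pp_le hS rS hT rT -> pp_le hP1 rP1 hQ1 rQ1 /\ pp_le hP2 rP2 hQ2 rQ2.
Proof.
case=> theta [bij tot hr].
have inj := bij_inj bij.
have C : forall x z, ~~ (isr (theta (inl x)) && ~~ isr (theta (inr z))).
  move=> x z; have := tot _ _ (Scross x z).
  case: (theta (inl x)) => a; case: (theta (inr z)) => b //=.
  by move=> H; have := Tcross b a; rewrite H.
have L := side_l inj c2 C; have R := side_r inj c1 C.
have E1 : forall x, exists y, theta (inl x) == inl y.
  by move=> x; have := L x; case: (theta (inl x)) => // a _; exists a.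
have E2 : forall x, exists y, theta (inr x) == inr y.
  by move=> x; have := R x; case: (theta (inr x)) => // a _; exists a.
pose t1 x := xchoose (E1 x); pose t2 x := xchoose (E2 x).
have e1 : forall x, theta (inl x) = inl (t1 x) by move=> x; apply/eqP/(xchooseP (E1 x)).
have e2 : forall x, theta (inr x) = inr (t2 x) by move=> x; apply/eqP/(xchooseP (E2 x)).
split.
- exists t1; split.
  + apply: inj_card_bij; last by rewrite c1.
    move=> x y e; have : theta (inl x) = theta (inl y) by rewrite !e1 e.
    by move/inj; case.
  + by move=> x y; have := tot (inl x) (inl y); rewrite /pp_tot hS1 rS1 !e1 hT1 rT1.
  + by move=> x y; have := hr (inl x) (inl y); rewrite hS1 !e1 hT1.
- exists t2; split.
  + apply: inj_card_bij; last by rewrite c2.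
    move=> x y e; have : theta (inr x) = theta (inr y) by rewrite !e2 e.
    by move/inj; case.
  + by move=> x y; have := tot (inr x) (inr y); rewrite /pp_tot hS2 rS2 !e2 hT2 rT2.
  + by move=> x y; have := hr (inr x) (inr y); rewrite hS2 !e2 hT2.
Qed.

Lemma join_le
  (Sc : forall x z, ~~ pp_tot hS rS (inr z) (inl x))
  (Tc : forall x z, pp_tot hT rT (inl x) (inr z))
  (Hc1 : forall x z a b, hT (inl a) (inr b) -> hS (inl x) (inr z))
  (Hc2 : forall x z, hT (inr z) (inl x) = false) :
  pp_le hP1 rP1 hQ1 rQ1 -> pp_le hP2 rP2 hQ2 rQ2 -> pp_le hS rS hT rT.
Proof.
case=> t1 [b1 o1 h1] [t2 [b2 o2 h2]].
exists (fun a => match a with inl x => inl (t1 x) | inr y => inr (t2 y) end); split.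
- case: b1 => g1 k1 k1'; case: b2 => g2 k2 k2'.
  exists (fun a => match a with inl x => inl (g1 x) | inr y => inr (g2 y) end).
  + by case=> x /=; rewrite ?k1 ?k2.
  + by case=> x /=; rewrite ?k1' ?k2'.
- case=> x [] y.
  + by rewrite /pp_tot hS1 rS1 hT1 rT1; apply: o1.
  + by move=> _; apply: Tc.
  + by move=> H; have := Sc y x; rewrite H.
  + by rewrite /pp_tot hS2 rS2 hT2 rT2; apply: o2.
- case=> x [] y.
  + by rewrite hS1 hT1; apply: h1.
  + by apply: Hc1.
  + by rewrite Hc2.
  + by rewrite hS2 hT2; apply: h2.
Qed.

End Split.

Theorem proposition16 (k l : nat)
  (TP1 TQ1 TP2 TQ2 : finType)
  (hP1 rP1 : rel TP1) (hQ1 rQ1 : rel TQ1)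
  (hP2 rP2 : rel TP2) (hQ2 rQ2 : rel TQ2) :
  plane_poset hP1 rP1 -> plane_poset hQ1 rQ1 ->
  plane_poset hP2 rP2 -> plane_poset hQ2 rQ2 ->
  #|TP1| = k -> #|TQ1| = k -> #|TP2| = l -> #|TQ2| = l ->
  [/\ (pp_le (prod_h hP1 hP2) (prod_r rP1 rP2) (prod_h hQ1 hQ2) (prod_r rQ1 rQ2)
       <-> pp_le (tri_h hP1 hP2) (tri_r rP1 rP2) (tri_h hQ1 hQ2) (tri_r rQ1 rQ2)),
      (pp_le (tri_h hP1 hP2) (tri_r rP1 rP2) (tri_h hQ1 hQ2) (tri_r rQ1 rQ2)
       <-> pp_le hP1 rP1 hQ1 rQ1 /\ pp_le hP2 rP2 hQ2 rQ2) &
      (pp_le (prod_h hP1 hP2) (prod_r rP1 rP2) (prod_h hQ1 hQ2) (prod_r rQ1 rQ2)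
       <-> pp_le hP1 rP1 hQ1 rQ1 /\ pp_le hP2 rP2 hQ2 rQ2)].
Proof.
move=> _ _ _ _ e1 e2 e3 e4.
have c1 : #|TP1| = #|TQ1| by rewrite e1 e2.
have c2 : #|TP2| = #|TQ2| by rewrite e3 e4.
have T : pp_le (tri_h hP1 hP2) (tri_r rP1 rP2) (tri_h hQ1 hQ2) (tri_r rQ1 rQ2)
       <-> pp_le hP1 rP1 hQ1 rQ1 /\ pp_le hP2 rP2 hQ2 rQ2.
  split.
  - by apply: split_le => //.
  - by case; apply: join_le => //.
have P : pp_le (prod_h hP1 hP2) (prod_r rP1 rP2) (prod_h hQ1 hQ2) (prod_r rQ1 rQ2)
       <-> pp_le hP1 rP1 hQ1 rQ1 /\ pp_le hP2 rP2 hQ2 rQ2.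
  split.
  - by apply: split_le => //.
  - by case; apply: join_le => //.
split => //; split => [/P/T //| /T/P //].
Qed.
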